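(* If $\mathcal{H}$ is a complex Hilbert space with $\dim \mathcal{H} = 3$, then every partial isometry $T \in B(\mathcal{H})$ is a complex symmetric operator.
   Context: A partial isometry is an operator $T$ such that $T^*T$ is an orthogonal projection. A conjugation on $\mathcal{H}$ is a conjugate-linear map $C:\mathcal{H}\to\mathcal{H}$ that is isometric and involutive ($C^2=I$). An operator $T$ is complex symmetric if $T = CT^*C$ for some conjugation $C$. *)

(* Defs.v *)
From HB Require Import structures.
From mathcomp Require Import all_boot all_order all_algebra.
From mathcomp Require Import reals.
From mathcomp.real_closed Require Import complex.
Set Implicit Arguments. Unset Strict Implicit. Unset Printing Implicit Defensive.
Import Order.TTheory GRing.Theory Num.Theory.
Local Open Scope ring_scope.

Section Defs.
Variable R : realType.
Variable n : nat.
Local Notation C := (R[i]).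

Definition adj (A : 'M[C]_n) : 'M[C]_n := \matrix_(i, j) (A j i)^*.

Definition dotc (u v : 'cV[C]_n) : C := \sum_(i < n) u i 0 * (v i 0)^*.

Definition is_conjugation (J : 'cV[C]_n -> 'cV[C]_n) : Prop :=
  [/\ (forall (a : C) (x y : 'cV[C]_n), J (a *: x + y) = a^* *: J x + J y),
      (forall x, dotc (J x) (J x) = dotc x x)
    & (forall x, J (J x) = x)].

Definition is_orth_proj (P : 'M[C]_n) : Prop := P *m P = P /\ adj P = P.

Definition partial_isometry (T : 'M[C]_n) : Prop := is_orth_proj (adj T *m T).

Definition complex_symmetric (T : 'M[C]_n) : Prop :=
  exists J : 'cV[C]_n -> 'cV[C]_n,
    is_conjugation J /\ forall x, T *m x = J (adj T *m J x).
End Defs.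

(* Main.v *)
Require Import Defs.
From HB Require Import structures.
From mathcomp Require Import all_boot all_order all_algebra.
From mathcomp Require Import reals spectral sesquilinear ring.
From mathcomp.real_closed Require Import complex.
Set Implicit Arguments. Unset Strict Implicit. Unset Printing Implicit Defensive.
Import Order.TTheory GRing.Theory Num.Theory.
Local Open Scope ring_scope.

Section Aux.
Variable R : realType.
Local Notation C := (R[i]).
Variable n : nat.
Implicit Types A B : 'M[C]_n.

Lemma adjE A i j : adj A i j = (A j i)^*.
Proof. by rewrite mxE. Qed.

Lemma adjK A : adj (adj A) = A.
Proof. by apply/matrixP => i j; rewrite !mxE conjCK. Qed.

Lemma adjM A B : adj (A *m B) = adj B *m adj A.
Proof.
apply/matrixP => i j; rewrite !mxE rmorph_sum; apply: eq_bigr => k _.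
by rewrite !mxE rmorphM mulrC.
Qed.

Lemma adjD A B : adj (A + B) = adj A + adj B.
Proof. by apply/matrixP => i j; rewrite !mxE rmorphD. Qed.

Lemma adjN A : adj (- A) = - adj A.
Proof. by apply/matrixP => i j; rewrite !mxE rmorphN. Qed.

Lemma adjB A B : adj (A - B) = adj A - adj B.
Proof. by rewrite adjD adjN. Qed.

Lemma adj1 : adj (1%:M : 'M[C]_n) = 1%:M.
Proof. by apply/matrixP => i j; rewrite !mxE eq_sym; case: (_ == _); rewrite ?conjC1 ?conjC0. Qed.

Lemma adj0 : adj (0 : 'M[C]_n) = 0.
Proof. by apply/matrixP => i j; rewrite !mxE conjC0. Qed.

Lemma adj_diag (d : 'rV[C]_n) : adj (diag_mx d) = diag_mx (map_mx Num.conj d).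
Proof.
apply/matrixP => i j; rewrite !mxE eq_sym; case: (i == j) /eqP => [->|]; 
by rewrite ?mulr1n ?mulr0n ?conjC0.
Qed.

Lemma adj_tC A : adj A = (A ^t* )%sesqui.
Proof. by apply/matrixP => i j; rewrite !mxE. Qed.

Lemma adj_eq0 A : adj A *m A = 0 -> A = 0.
Proof.
move=> H; apply/matrixP => i j; rewrite mxE.
have /matrixP /(_ j j) := H; rewrite !mxE => Hs.
have Hs2 : \sum_k (A k j)^* * A k j = 0.
  by rewrite -[RHS]Hs; apply: eq_bigr => k _; rewrite mxE.
move: Hs2 => {Hs} Hs.
have pos : forall k : 'I_n, true -> 0 <= (A k j)^* * A k j.
  by move=> k _ /=; rewrite mulrC mul_conjC_ge0.
have := psumr_eq0P pos Hs (isT : xpredT i).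
by move=> H0; apply/eqP; rewrite -mul_conjC_eq0 mulrC H0.
Qed.

Lemma unitary_sym A : A *m adj A = 1%:M -> adj A *m A = 1%:M.
Proof. exact: mulmx1C. Qed.

End Aux.
Section Spec.
Variable R : realType.
Local Notation C := (R[i]).
Variable n : nat.
Implicit Types A B : 'M[C]_n.

Lemma spec_normal A : A *m adj A = adj A *m A ->
  exists U : 'M[C]_n, exists d : 'rV[C]_n, U *m adj U = 1%:M /\ A = adj U *m diag_mx d *m U.
Proof.
move=> HA.
have Hn : A \is normalmx by apply/normalmxP; rewrite -adj_tC.
have := orthomx_spectralP Hn; rewrite /= invmx_unitary ?spectral_unitarymx // -adj_tC => E.
exists (spectralmx A), (spectral_diag A); split => //.
by have /unitarymxP := spectral_unitarymx A; rewrite -adj_tC.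
Qed.

Lemma diag_conj (U : 'M[C]_n) (d : 'rV[C]_n) : U *m adj U = 1%:M ->
  U *m (adj U *m diag_mx d *m U) *m adj U = diag_mx d.
Proof.
move=> HU; have HU' := mulmx1C HU.
by rewrite !mulmxA HU mul1mx -mulmxA HU mulmx1.
Qed.

Lemma spec_proj H : H *m H = H -> adj H = H ->
  exists U : 'M[C]_n, exists b : 'I_n -> bool,
    U *m adj U = 1%:M /\ H = adj U *m diag_mx (\row_j (b j)%:R) *m U.
Proof.
move=> HH Hadj.
have [U [d [HU E]]] : exists U : 'M[C]_n, exists d : 'rV[C]_n, U *m adj U = 1%:M /\ H = adj U *m diag_mx d *m U.
  by apply: spec_normal; rewrite Hadj.
have HU' := mulmx1C HU.
have Hd : diag_mx d *m diag_mx d = diag_mx d.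
  rewrite -(diag_conj d HU) -E.
  by rewrite !mulmxA -(mulmxA _ (adj U) U) HU' mulmx1 -(mulmxA U H H) HH.
exists U, (fun j => d 0 j == 1); split => //; rewrite E; congr (_ *m diag_mx _ *m _).
apply/rowP => j; rewrite !mxE.
have /matrixP /(_ j j) := Hd; rewrite mulmx_diag !mxE eqxx mulr1n => Hj.
have : d 0 j * (d 0 j - 1) = 0 by rewrite mulrBr mulr1 Hj subrr.
move/eqP; rewrite mulf_eq0 subr_eq0 => /orP [/eqP ->|/eqP ->]; last by rewrite eqxx.
by rewrite eq_sym oner_eq0.
Qed.

End Spec.
Definition bnth (b0 b1 b2 : bool) (i : nat) := nth false [:: b0; b1; b2] i.
Definition rk3 (b0 b1 : bool) (i : nat) : nat := (((0 < i)%N && ~~ b0) + ((1 < i)%N && ~~ b1))%N.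
Definition em (b0 b1 b2 c0 c1 c2 : bool) (i j : nat) : bool :=
  [&& ~~ bnth c0 c1 c2 i, ~~ bnth b0 b1 b2 j & rk3 c0 c1 i == rk3 b0 b1 j].

Lemma em_core (b0 b1 b2 c0 c1 c2 : bool) : (b0 + b1 + b2 = c0 + c1 + c2)%N ->
  forall i j, (i < 3)%N -> (j < 3)%N ->
  ((em b0 b1 b2 c0 c1 c2 0 i && em b0 b1 b2 c0 c1 c2 0 j)
   + (em b0 b1 b2 c0 c1 c2 1 i && em b0 b1 b2 c0 c1 c2 1 j)
   + (em b0 b1 b2 c0 c1 c2 2 i && em b0 b1 b2 c0 c1 c2 2 j)
    = ((i == j) && ~~ bnth b0 b1 b2 i))%N /\
  ((em b0 b1 b2 c0 c1 c2 i 0 && em b0 b1 b2 c0 c1 c2 j 0)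
   + (em b0 b1 b2 c0 c1 c2 i 1 && em b0 b1 b2 c0 c1 c2 j 1)
   + (em b0 b1 b2 c0 c1 c2 i 2 && em b0 b1 b2 c0 c1 c2 j 2)
    = ((i == j) && ~~ bnth c0 c1 c2 i))%N.
Proof.
by case: b0; case: b1; case: b2; case: c0; case: c1; case: c2 => //= _
  [|[|[|i]]] [|[|[|j]]].
Qed.
Section Match.
Variable R : realType.
Local Notation C := (R[i]).

Definition o0 : 'I_3 := Ordinal (isT : (0 < 3)%N).
Definition o1 : 'I_3 := Ordinal (isT : (1 < 3)%N).
Definition o2 : 'I_3 := Ordinal (isT : (2 < 3)%N).

Lemma sum3 (F : 'I_3 -> C) : \sum_k F k = F o0 + F o1 + F o2.
Proof.
rewrite !big_ord_recl big_ord0 addr0 addrA.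
by congr (_ + _ + _); congr F; apply: val_inj.
Qed.

Lemma bnthE (b : 'I_3 -> bool) (i : 'I_3) : bnth (b o0) (b o1) (b o2) i = b i.
Proof. by case: i => [[|[|[|]]] Hi] //=; congr b; apply: val_inj. Qed.

Definition Em (b c : 'I_3 -> bool) : 'M[C]_3 :=
  \matrix_(i, j) (em (b o0) (b o1) (b o2) (c o0) (c o1) (c o2) i j)%:R.

Definition dgb (b : 'I_3 -> bool) : 'M[C]_3 := diag_mx (\row_j (b j)%:R).
Definition dgn (b : 'I_3 -> bool) : 'M[C]_3 := diag_mx (\row_j (~~ b j)%:R).

Lemma diag_entry (x : bool) (i j : 'I_3) :
  (x%:R *+ (i == j) : C) = ((nat_of_ord i == nat_of_ord j) && x)%:R.
Proof.
have -> : (nat_of_ord i == nat_of_ord j) = (i == j) by [].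
by case: (i == j); case: x.
Qed.

Lemma Em_adj (b c : 'I_3 -> bool) : (b o0 + b o1 + b o2 = c o0 + c o1 + c o2)%N ->
  adj (Em b c) *m Em b c = dgn b /\ Em b c *m adj (Em b c) = dgn c.
Proof.
move=> H; split; apply/matrixP => i j; rewrite !mxE sum3 !mxE !conjC_nat
  -!natrM -!natrD !mulnb diag_entry
  -[nat_of_ord o0]/0%N -[nat_of_ord o1]/1%N -[nat_of_ord o2]/2%N.
- by rewrite -(bnthE b i) (proj1 (em_core H (ltn_ord i) (ltn_ord j))).
- by rewrite -(bnthE c i) (proj2 (em_core H (ltn_ord i) (ltn_ord j))).
Qed.

Lemma dgb_Em b c : dgb c *m Em b c = 0.
Proof.
apply/matrixP => i j; rewrite mul_diag_mx !mxE -(bnthE c i).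
by rewrite /em; case: (bnth (c o0) (c o1) (c o2) i); rewrite ?mul0r ?mul1r.
Qed.

Lemma Em_dgb b c : Em b c *m dgb b = 0.
Proof.
apply/matrixP => i j; rewrite mul_mx_diag !mxE -(bnthE b j).
by rewrite /em; case: (bnth (b o0) (b o1) (b o2) j); rewrite ?mulr0 ?mulr1 ?andbF.
Qed.

End Match.
Section Ext.
Variable R : realType.
Local Notation C := (R[i]).
Implicit Types T U X Y : 'M[C]_3.

Lemma mulUUt U m (M : 'M[C]_(m, 3)) : U *m adj U = 1%:M -> M *m U *m adj U = M.
Proof. by move=> HU; rewrite -mulmxA HU mulmx1. Qed.

Lemma mulUtU U m (M : 'M[C]_(m, 3)) : U *m adj U = 1%:M -> M *m adj U *m U = M.
Proof. by move=> HU; rewrite -mulmxA (mulmx1C HU) mulmx1. Qed.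

Lemma dgbn b : dgb R b + dgn R b = 1%:M.
Proof.
apply/matrixP => i j; rewrite !mxE -mulrnDl.
by case: (b i); rewrite /= ?addr0 ?add0r.
Qed.

Lemma dgnb_mul b : dgn R b *m dgb R b = 0.
Proof.
apply/matrixP => i j; rewrite mul_diag_mx !mxE.
by case: (b i); case: (i == j); rewrite /= ?mulr0 ?mul0r.
Qed.

Lemma dgbn_mul b : dgb R b *m dgn R b = 0.
Proof. by rewrite /dgb /dgn diag_mxC dgnb_mul. Qed.

Lemma adj_dgb b : adj (dgb R b) = dgb R b.
Proof.
rewrite /dgb adj_diag; congr diag_mx; apply/rowP => j.
by rewrite !mxE conjC_nat.
Qed.

Lemma adj_dgn b : adj (dgn R b) = dgn R b.
Proof.
rewrite /dgn adj_diag; congr diag_mx; apply/rowP => j.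
by rewrite !mxE conjC_nat.
Qed.

Lemma tr_dgb b : \tr (dgb R b) = (b o0 + b o1 + b o2)%N%:R.
Proof. by rewrite /dgb mxtrace_diag sum3 !mxE !natrD. Qed.

Lemma unitary_ext T : partial_isometry T ->
  exists T', T' *m adj T' = 1%:M /\ T = T' *m (adj T *m T).
Proof.
case; set P := adj T *m T => HPP HPa.
have TP : T *m P = T.
  apply/eqP; rewrite -subr_eq0; apply/eqP; apply: adj_eq0.
  rewrite adjB adjM HPa mulmxBl !mulmxBr !mulmxA -!(mulmxA P (adj T) T) -/P.
  by rewrite -(mulmxA (P *m P)) -/P !HPP !subrr.
set Q := T *m adj T.
have HQQ : Q *m Q = Q by rewrite /Q mulmxA -(mulmxA T) -/P TP.
have HQa : adj Q = Q by rewrite /Q adjM adjK.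
have [Y [b [HY EP]]] := spec_proj HPP HPa.
have [X [c [HX EQ]]] := spec_proj HQQ HQa.
have HY' := mulmx1C HY; have HX' := mulmx1C HX.
set Z := X *m T *m adj Y.
have ZZ : adj Z *m Z = dgb R b.
  rewrite /Z !adjM adjK !mulmxA mulUtU // -(mulmxA _ (adj T) T) -/P EP.
  by rewrite !mulmxA HY mul1mx mulUUt.
have ZZ' : Z *m adj Z = dgb R c.
  rewrite /Z !adjM adjK !mulmxA mulUtU // -(mulmxA _ T (adj T)) -/Q EQ.
  by rewrite !mulmxA HX mul1mx mulUUt.
have Hcnt : (b o0 + b o1 + b o2 = c o0 + c o1 + c o2)%N.
  apply/eqP; rewrite -(eqr_nat C) -!tr_dgb -ZZ -ZZ' mxtrace_mulC //.
have Zn : Z *m dgn R b = 0.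
  apply: adj_eq0; rewrite adjM adj_dgn mulmxA -(mulmxA _ (adj Z) Z) ZZ.
  by rewrite dgnb_mul mul0mx.
have nZ : dgn R c *m Z = 0.
  rewrite -[LHS]adjK; apply/eqP; rewrite -[adj _ == 0]/(_ == _).
  have -> : adj (dgn R c *m Z) = 0.
    apply: adj_eq0; rewrite adjK adjM adj_dgn mulmxA -(mulmxA _ Z (adj Z)) ZZ'.
    by rewrite dgnb_mul mul0mx.
  by rewrite adj0.
set E := Em R b c.
have [EE EE'] := Em_adj R Hcnt.
have En : E = dgn R c *m E.
  by rewrite -[LHS]mul1mx -(dgbn c) mulmxDl dgb_Em add0r.
have ZE : adj Z *m E = 0.
  by rewrite En mulmxA -adj_dgn -adjM nZ adj0 mul0mx.
have EZ : adj E *m Z = 0.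
  by rewrite -[Z]adjK -adjM ZE adj0.
set Z' := Z + E.
have HZ' : adj Z' *m Z' = 1%:M.
  by rewrite /Z' adjD mulmxDl !mulmxDr ZZ ZE EZ EE addr0 add0r dgbn.
have HZ'' := mulmx1C HZ'.
have Zd : Z' *m dgb R b = Z.
  rewrite /Z' mulmxDl Em_dgb addr0.
  by rewrite -[RHS]mulmx1 -(dgbn b) mulmxDr Zn addr0.
exists (adj X *m Z' *m Y); split.
  rewrite !adjM adjK !mulmxA mulUUt // -(mulmxA _ Z' (adj Z')) HZ'' mulmx1.
  by rewrite HX'.
rewrite EP !mulmxA mulUUt // -(mulmxA _ Z') Zd /Z !mulmxA HX' mul1mx.
by rewrite mulUtU.
Qed.

End Ext.
Section Phase.
Variable R : realType.
Local Notation C := (R[i]).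

Definition realc (x : C) := x^* = x.
Definition uph (z : C) : C := if z == 0 then 1 else z / `|z|.

Lemma uph_unit (z : C) : (uph z)^* * uph z = 1.
Proof.
rewrite /uph; case: eqP => [_|/eqP nz]; first by rewrite conjC1 mulr1.
have nn : `|z| != 0 by rewrite normr_eq0.
rewrite rmorphM /= fmorphV /= conj_normC mulrACA -normCKC -invrM ?unitfE //.
by rewrite -expr2 divff // expf_neq0.
Qed.

Lemma uph_abs (z : C) : z * (uph z)^* = `|z|.
Proof.
rewrite /uph; case: eqP => [->|/eqP nz]; first by rewrite mul0r normr0.
have nn : `|z| != 0 by rewrite normr_eq0.
by rewrite rmorphM /= fmorphV /= conj_normC mulrA -normCK expr2 mulrK // unitfE.
Qed.

Lemma realc_norm (z : C) : realc `|z|.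
Proof. exact: conj_normC. Qed.

Lemma realcM (x y : C) : realc x -> realc y -> realc (x * y).
Proof. by rewrite /realc rmorphM /= => -> ->. Qed.

Lemma realcV (x : C) : realc x -> realc x^-1.
Proof. by rewrite /realc fmorphV /= => ->. Qed.

Lemma realc0 : realc 0.
Proof. by rewrite /realc conjC0. Qed.

Lemma phase_exists (a b c : C) : realc (a * b * c^*) ->
  exists s2 s3 : C, [/\ s2^* * s2 = 1, s3^* * s3 = 1,
    realc (a * s2), realc (s2^* * b * s3) & realc (c * s3)].
Proof.
move=> Hr.
have [a0|an] := eqVneq a 0.
  exists (uph (b * (uph c)^*)), (uph c)^*; split.
  - exact: uph_unit.
  - by rewrite conjCK mulrC uph_unit.
  - by rewrite a0 mul0r; exact: realc0.
  - by rewrite -mulrA mulrC uph_abs; exact: realc_norm.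
  - by rewrite uph_abs; exact: realc_norm.
have [c0|cn] := eqVneq c 0.
  exists (uph a)^*, (uph (uph a * b))^*; split.
  - by rewrite conjCK mulrC uph_unit.
  - by rewrite conjCK mulrC uph_unit.
  - by rewrite uph_abs; exact: realc_norm.
  - by rewrite conjCK uph_abs; exact: realc_norm.
  - by rewrite c0 mul0r; exact: realc0.
exists (uph a)^*, (uph c)^*; split.
- by rewrite conjCK mulrC uph_unit.
- by rewrite conjCK mulrC uph_unit.
- by rewrite uph_abs; exact: realc_norm.
- rewrite conjCK /uph (negPf an) (negPf cn).
  rewrite rmorphM /= fmorphV /= conj_normC.
  have -> : a / `|a| * b * (c^* / `|c|) = (a * b * c^*) * (`|a| * `|c|)^-1.
    by rewrite invfM; ring.
  by apply: realcM => //; apply: realcV; apply: realcM; exact: realc_norm.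
- by rewrite uph_abs; exact: realc_norm.
Qed.

End Phase.
Section PhaseMx.
Variable R : realType.
Local Notation C := (R[i]).

Lemma realc_conj (x : C) : realc x -> realc x^*.
Proof. by rewrite /realc conjCK => ->. Qed.

Lemma ord3_0 (H : (0 < 3)%N) : Ordinal H = o0. Proof. exact: val_inj. Qed.
Lemma ord3_1 (H : (1 < 3)%N) : Ordinal H = o1. Proof. exact: val_inj. Qed.
Lemma ord3_2 (H : (2 < 3)%N) : Ordinal H = o2. Proof. exact: val_inj. Qed.

Lemma phase_mx (K : 'M[C]_3) : K *m K = K -> adj K = K ->
  exists s : 'rV[C]_3, (forall j, (s 0 j)^* * s 0 j = 1) /\
   (diag_mx (map_mx Num.conj s) *m K *m diag_mx s)^T
     = diag_mx (map_mx Num.conj s) *m K *m diag_mx s.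
Proof.
move=> HKK HKa.
have Kh : forall i j, K j i = (K i j)^*.
  by move=> i j; have /matrixP /(_ j i) := HKa; rewrite !mxE => <-.
have Kr : forall i, realc (K i i).
  by move=> i; rewrite /realc -Kh.
have Hc : realc (K o0 o1 * K o1 o2 * (K o0 o2)^*).
  have E10 : K o1 o0 = K o1 o0 * K o0 o0 + K o1 o1 * K o1 o0 + K o1 o2 * K o2 o0.
    by have /matrixP /(_ o1 o0) := HKK; rewrite mxE sum3 => ->.
  have -> : K o0 o1 * K o1 o2 * (K o0 o2)^*
      = K o0 o1 * K o1 o0 * (1 - K o0 o0 - K o1 o1).
    rewrite -Kh -!mulrA; congr (_ * _).
    transitivity (K o1 o0 - K o1 o0 * K o0 o0 - K o1 o1 * K o1 o0); last by ring.
    by rewrite {1}E10; ring.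
  rewrite /realc !rmorphM !rmorphB /= conjC1 (Kr o0) (Kr o1) -!Kh.
  by rewrite [K o1 o0 * _]mulrC.
have [s2 [s3 [u2 u3 r1 r2 r3]]] := phase_exists Hc.
pose sf (j : 'I_3) : C := if (val j == 0)%N then 1 else if (val j == 1)%N then s2 else s3.
exists (\row_j sf j); split.
  by move=> [[|[|[|j]]] Hj]; rewrite !mxE /sf /= ?conjC1 ?mulr1.
set ent := fun i j : 'I_3 => (sf i)^* * K i j * sf j.
have entE : forall i j, (diag_mx (map_mx Num.conj (\row_j sf j)) *m K *m diag_mx (\row_j sf j)) i j = ent i j.
  by move=> i j; rewrite mul_mx_diag mul_diag_mx !mxE.
have key : forall i j, realc (ent i j) -> ent j i = ent i j.
  move=> i j Hr; transitivity (ent i j)^*; last exact: Hr.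
  by rewrite /ent (Kh i j) !rmorphM /= conjCK; ring.
have uu : forall x y : C, y^* * y = 1 -> realc x -> realc (y^* * x * y).
  by move=> x y Hy Hx; rewrite mulrAC Hy mul1r.
have Rall : forall i j : 'I_3, (i <= j)%N -> realc (ent i j).
  move=> [[|[|[|i]]] Hi] [[|[|[|j]]] Hj] //= _; rewrite /ent /sf /=;
    rewrite ?conjC1 ?mul1r ?mulr1 ?ord3_0 ?ord3_1 ?ord3_2.
  - exact: Kr.
  - exact: r1.
  - exact: r3.
  - exact: uu (Kr o1).
  - exact: r2.
  - exact: uu (Kr o2).
apply/matrixP => i j; rewrite mxE !entE.
have [le|lt] := leqP i j; first exact: key i j (Rall i j le).
by symmetry; exact: key j i (Rall j i (ltnW lt)).
Qed.

End PhaseMx.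
Section Final.
Variable R : realType.
Local Notation C := (R[i]).

Lemma dotcE (u v : 'cV[C]_3) : dotc u v = ((map_mx Num.conj v)^T *m u) 0 0.
Proof. by rewrite /dotc mxE; apply: eq_bigr => i _; rewrite !mxE mulrC. Qed.

Lemma map_adj (A : 'M[C]_3) : map_mx Num.conj (adj A) = A^T.
Proof. by apply/matrixP => i j; rewrite !mxE conjCK. Qed.

Lemma trmx_map_adj (A : 'M[C]_3) : (map_mx Num.conj A)^T = adj A.
Proof. by apply/matrixP => i j; rewrite !mxE. Qed.

Lemma map_conjK m n (A : 'M[C]_(m, n)) : map_mx Num.conj (map_mx Num.conj A) = A.
Proof. by apply/matrixP => i j; rewrite !mxE conjCK. Qed.

Lemma map_conjM m n p (A : 'M[C]_(m, n)) (B : 'M[C]_(n, p)) :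
  map_mx Num.conj (A *m B) = map_mx Num.conj A *m map_mx Num.conj B.
Proof.
apply/matrixP => i j; rewrite !mxE rmorph_sum; apply: eq_bigr => k _.
by rewrite !mxE rmorphM.
Qed.

Lemma map_conjD m n (A B : 'M[C]_(m, n)) :
  map_mx Num.conj (A + B) = map_mx Num.conj A + map_mx Num.conj B.
Proof. by apply/matrixP => i j; rewrite !mxE rmorphD. Qed.

Lemma map_conjZ m n a (A : 'M[C]_(m, n)) :
  map_mx Num.conj (a *: A) = a^* *: map_mx Num.conj A.
Proof. by apply/matrixP => i j; rewrite !mxE rmorphM. Qed.

Lemma cs_from_W (T W : 'M[C]_3) : W *m adj W = 1%:M -> W^T = W ->
  (T *m W)^T = T *m W -> complex_symmetric T.
Proof.
move=> HW WT TWs.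
have HW' := mulmx1C HW.
have mW : map_mx Num.conj W = adj W.
  by apply/matrixP => i j; rewrite !mxE; congr (_^*); rewrite -{1}WT mxE.
exists (fun x => W *m map_mx Num.conj x); split; first split.
- by move=> a x y; rewrite map_conjD map_conjZ mulmxDr scalemxAr.
- move=> x; rewrite !dotcE map_conjM map_conjK trmx_mul trmx_map_adj.
  rewrite mulmxA -(mulmxA _ (adj W) W) HW' mulmx1 !mxE.
  by apply: eq_bigr => i _; rewrite !mxE mulrC.
- by move=> x; rewrite map_conjM map_conjK mulmxA mW HW mul1mx.
move=> x; rewrite !map_conjM map_conjK map_adj mW !mulmxA.
have -> : W *m T^T = T *m W by rewrite -TWs trmx_mul WT.
by rewrite -(mulmxA T W) HW mulmx1.
Qed.

End Final.
Section Main.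
Variable R : realType.
Local Notation C := (R[i]).

Lemma adj_tr (A : 'M[C]_3) : adj (A^T) = (adj A)^T.
Proof. by apply/matrixP => i j; rewrite !mxE. Qed.

Lemma diag_mul (d e f : 'rV[C]_3) : (forall j, d 0 j * e 0 j = f 0 j) ->
  diag_mx d *m diag_mx e = diag_mx f.
Proof.
by move=> H; rewrite mulmx_diag; congr diag_mx; apply/rowP => j; rewrite !mxE H.
Qed.

Lemma sym_form (V : 'M[C]_3) (e : 'rV[C]_3) (K0 : 'M[C]_3) : K0^T = K0 ->
  (V *m diag_mx e *m K0 *m diag_mx e *m V^T)^T = V *m diag_mx e *m K0 *m diag_mx e *m V^T.
Proof. by move=> HK; rewrite !trmx_mul trmxK tr_diag_mx HK !mulmxA. Qed.

Lemma main_thm (T : 'M[C]_3) : partial_isometry T -> complex_symmetric T.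
Proof.
move=> HT; have [HPP HPa] := HT.
have [T' [HT' ET]] := unitary_ext HT.
set P := adj T *m T in HPP HPa ET *.
clearbody P.
have HT'' := mulmx1C HT'.
have [U [d [HU ET']]] := spec_normal (A := T') (etrans HT' (esym HT'')).
have HU' := mulmx1C HU.
have Dd : diag_mx (map_mx Num.conj d) *m diag_mx d = 1%:M.
  have : U *m (adj T' *m T') *m adj U = 1%:M by rewrite HT'' mulmx1 HU.
  rewrite ET' !adjM adjK adj_diag !mulmxA HU mul1mx mulUUt //.
  by rewrite mulUUt.
have du : forall j, (d 0 j)^* * d 0 j = 1.
  move=> j; have /matrixP /(_ j j) := Dd; rewrite mulmx_diag !mxE eqxx.
  by rewrite mulr1n.
set K := U *m P *m adj U.
have HKK : K *m K = K.
  by rewrite /K !mulmxA mulUtU // -(mulmxA U P P) HPP.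
have HKa : adj K = K by rewrite /K !adjM adjK HPa mulmxA.
have [s [su Ks]] := phase_mx HKK HKa.
set K0 := diag_mx (map_mx Num.conj s) *m K *m diag_mx s in Ks.
set e := \row_j (d 0 j * s 0 j).
set f := \row_j (d 0 j * s 0 j * s 0 j).
set W := adj U *m diag_mx f *m (adj U)^T.
apply: (@cs_from_W R T W).
- rewrite /W !adjM adj_tr adjK adj_diag !mulmxA -(mulmxA _ (adj U)^T) -trmx_mul HU trmx1.
  rewrite mulmx1 -(mulmxA _ (diag_mx f)) (@diag_mul _ _ (const_mx 1)).
    by rewrite diag_const_mx mulmx1 HU'.
  move=> j; rewrite !mxE.
  transitivity (((d 0 j)^* * d 0 j) * ((s 0 j)^* * s 0 j) * ((s 0 j)^* * s 0 j)).
    by rewrite !rmorphM /=; ring.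
  by rewrite du su !mulr1.
- by rewrite /W !trmx_mul trmxK tr_diag_mx mulmxA.
have E1 : forall M : 'M[C]_3, M *m diag_mx e *m K0 *m diag_mx e
    = M *m diag_mx d *m K *m diag_mx f.
  move=> M; rewrite /K0 !mulmxA -(mulmxA M) (@diag_mul _ _ d); last first.
    by move=> j; rewrite !mxE -mulrA [s 0 j * _]mulrC su mulr1.
  rewrite -(mulmxA _ (diag_mx s)) (@diag_mul _ _ f) //.
  by move=> j; rewrite !mxE; ring.
have E2 : forall M : 'M[C]_3, M *m U *m P *m adj U = M *m K.
  by move=> M; rewrite /K !mulmxA.
have -> : T *m W = adj U *m diag_mx e *m K0 *m diag_mx e *m (adj U)^T.
  rewrite E1 ET ET' /W !mulmxA E2.
  by [].
exact: (sym_form (adj U) e Ks).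
Qed.

End Main.

Theorem corollary5p2 (R : realType) (T : 'M[R[i]]_3) :
  partial_isometry T -> complex_symmetric T.
Proof. exact: main_thm. Qed.
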